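(* Let $A,B,C,D,E,F$ be real numbers such that the $8\times 8$ matrix $$\gamma=\begin{pmatrix}\mathcal A&\mathcal C\\ \mathcal C&\mathcal B\end{pmatrix},\quad \mathcal A=\mathrm{diag}(A,B,A,B),\ \mathcal B=\mathrm{diag}(C,D,C,D),\ \mathcal C=\begin{pmatrix}E&0&0&0\\0&0&0&-F\\0&0&-E&0\\0&-F&0&0\end{pmatrix}$$ is the covariance matrix of a four-mode Gaussian state (the generalized Werner–Wolf state), where modes 1,2 form party $A$ and modes 3,4 form party $B$. This state is separable with respect to the bipartition (modes 1,2)$|$(modes 3,4) if and only if $$(AC-E^2)(BD-F^2)-2|EF|-CD-AB+1\geq 0.$$
   Context: Quadratures are ordered as $(\hat x_1,\hat p_1,\hat x_2,\hat p_2,\hat x_3,\hat p_3,\hat x_4,\hat p_4)$ with $[\hat R_j,\hat R_l]=i\sigma_{jl}$, $\sigma=\begin{pmatrix}0&1\\-1&0\end{pmatrix}^{\oplus 4}$. The covariance matrix is $\gamma_{ij}=\langle \hat R_i\hat R_j+\hat R_j\hat R_i\rangle-2\langle\hat R_i\rangle\langle\hat R_j\rangle$ (vacuum has covariance matrix $I$), and $\gamma$ is a valid covariance matrix iff $\gamma+i\sigma\ge 0$. *)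

(* Defs.v *)
From HB Require Import structures.
From mathcomp Require Import all_boot all_order all_algebra all_reals.
From mathcomp Require Export complex.
Set Implicit Arguments. Unset Strict Implicit. Unset Printing Implicit Defensive.
Import Order.TTheory GRing.Theory Num.Theory.
Local Open Scope ring_scope.

(* Symplectic form sigma = (0 1; -1 0)^{(+) n} for quadratures ordered
   (x_1, p_1, ..., x_n, p_n): index 2k is x_{k+1}, index 2k+1 is p_{k+1}. *)
Definition symp_form (R : pzRingType) (n : nat) : 'M[R]_(n.*2) :=
  \matrix_(i, j)
    (if ~~ odd i && (nat_of_ord j == (nat_of_ord i).+1) then 1
     else if odd i && (nat_of_ord i == (nat_of_ord j).+1) then -1 else 0).

Definition cpsd (R : rcfType) (n : nat) (M : 'M[R[i]]_n) : Prop :=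
  (map_mx (@conjc R) M)^T = M /\
  forall v : 'cV[R[i]]_n, 0 <= ((map_mx (@conjc R) v)^T *m M *m v) 0 0.

Definition rpsd (R : realDomainType) (n : nat) (M : 'M[R]_n) : Prop :=
  M^T = M /\ forall v : 'cV[R]_n, 0 <= (v^T *m M *m v) 0 0.

Definition is_cov (R : rcfType) (n : nat) (g : 'M[R]_(n.*2)) : Prop :=
  cpsd (map_mx (real_complex R) g
        + (Complex 0 1) *: map_mx (real_complex R) (symp_form R n)).

(* Separability of an (m+n)-mode Gaussian state with covariance matrix g with
   respect to the bipartition (first m modes) | (last n modes), via the
   Werner-Wolf criterion: there exist valid covariance matrices gA, gB of the
   two parties with g >= gA (+) gB. *)
Definition gaussian_separable (R : rcfType) (m n : nat)
    (g : 'M[R]_(m.*2 + n.*2)) : Prop :=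
  exists (gA : 'M[R]_(m.*2)) (gB : 'M[R]_(n.*2)),
    is_cov gA /\ is_cov gB /\ rpsd (g - block_mx gA 0 0 gB).

Definition diag4 (R : pzRingType) (a b : R) : 'M[R]_4 :=
  diag_mx (\row_(j < 4) nth 0 [:: a; b; a; b] j).

Definition wwC (R : pzRingType) (E F : R) : 'M[R]_4 :=
  \matrix_(i < 4, j < 4)
    nth 0 (nth [::] [:: [:: E; 0; 0; 0];
                        [:: 0; 0; 0; - F];
                        [:: 0; 0; - E; 0];
                        [:: 0; - F; 0; 0]] i) j.

Definition ww_gamma (R : pzRingType) (A B C D E F : R) : 'M[R]_(2.*2 + 2.*2) :=
  block_mx (diag4 A B) (wwC E F) (wwC E F) (diag4 C D).

(* Main.v *)
Require Import Defs.
From mathcomp Require Import all_boot all_order all_algebra all_reals.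
From mathcomp Require Import ring lra.
Import Order.TTheory GRing.Theory Num.Theory.
Local Open Scope ring_scope.

Section Alg.
Variable R : realType.
Implicit Types (p q r A B C D E F : R).

Lemma quad_psd p q r :
  (forall x y : R, 0 <= p * x ^+ 2 + 2 * q * x * y + r * y ^+ 2) ->
  [/\ 0 <= p, 0 <= r & q ^+ 2 <= p * r].
Proof.
move=> H.
have Hp : 0 <= p by have := H 1 0; lra.
have Hr : 0 <= r by have := H 0 1; lra.
split=> //.
have [p0|pn0] := eqVneq p 0.
  have [q0|qn0] := eqVneq q 0; first by rewrite q0 p0; lra.
  have := H (- (r + 1) / (2 * q)) 1; rewrite p0.
  have -> : 2 * q * (- (r + 1) / (2 * q)) * 1 = - (r + 1) by field; rewrite qn0.
  lra.
have pp : 0 < p by rewrite lt0r pn0.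
have := H (- q) p.
have -> : p * (- q) ^+ 2 + 2 * q * - q * p + r * p ^+ 2 = p * (p * r - q ^+ 2) by ring.
rewrite pmulr_rge0 //; lra.
Qed.

Lemma only_if_alg A B C D E F a b c d :
  0 <= a -> 0 <= b -> 0 <= c -> 0 <= d -> 1 <= a * b -> 1 <= c * d ->
  0 <= A - a -> 0 <= C - c -> E ^+ 2 <= (A - a) * (C - c) ->
  0 <= B - b -> 0 <= D - d -> F ^+ 2 <= (B - b) * (D - d) ->
  0 <= (A * C - E ^+ 2) * (B * D - F ^+ 2) - 2 * `|E * F| - C * D - A * B + 1.
Proof.
move=> ha hb hc hd hab hcd.
set u := A - a; set v := C - c; set s := B - b; set t := D - d.
have -> : A = a + u by rewrite /u; ring.
have -> : C = c + v by rewrite /v; ring.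
have -> : B = b + s by rewrite /s; ring.
have -> : D = d + t by rewrite /t; ring.
move=> hu hv hE hs ht hF.
set X0 := a * c + a * v + u * c.
set Y0 := b * d + b * t + s * d.
have hX : X0 <= (a + u) * (c + v) - E ^+ 2 by rewrite /X0; lra.
have hY : Y0 <= (b + s) * (d + t) - F ^+ 2 by rewrite /Y0; lra.
have X0p : 0 <= X0 by rewrite /X0; nra.
have Y0p : 0 <= Y0 by rewrite /Y0; nra.
have hXY : X0 * Y0 <= ((a + u) * (c + v) - E ^+ 2) * ((b + s) * (d + t) - F ^+ 2).
  apply: ler_pM => //.
have hEF : 2 * `|E * F| <= a * v * s * d + u * c * b * t.
  have h1 : 0 <= a * v * s * d + u * c * b * t by rewrite addr_ge0 // !mulr_ge0.
  have h2 : (2 * `|E * F|) ^+ 2 <= (a * v * s * d + u * c * b * t) ^+ 2.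
    rewrite exprMn normrM exprMn !real_normK ?num_real //.
    have h3 : 4 * (a * v * s * d) * (u * c * b * t) <= (a * v * s * d + u * c * b * t) ^+ 2 by move: (a * v * s * d) (u * c * b * t) => x y; have := sqr_ge0 (x - y); rewrite sqrrB sqrrD; lra.
    have h4 : E ^+ 2 * F ^+ 2 <= (u * v) * (s * t) by apply: ler_pM; rewrite ?sqr_ge0 // mulrC.
    have h5 : u * v * (s * t) <= a * b * c * d * (u * v * (s * t)).
      have : 1 <= a * b * (c * d) by nra.
      move=> h; have huvst : 0 <= u * v * (s * t) by nra.
      nra.
    nra.
  by move: h2; rewrite ler_sqr ?nnegrE // mulr_ge0 // normr_ge0.
have key : 0 <= X0 * Y0 - (a * v * s * d + u * c * b * t) - (c + v) * (d + t) - (a + u) * (b + s) + 1.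
  rewrite /X0 /Y0.
  have hab' : 0 <= a * b - 1 by lra.
  have hcd' : 0 <= c * d - 1 by lra.
  have e1 : 0 <= (a * b - 1) * (c * d - 1) by rewrite mulr_ge0.
  have e2 : 0 <= c * t * (a * b - 1) by rewrite !mulr_ge0.
  have e3 : 0 <= a * s * (c * d - 1) by rewrite !mulr_ge0.
  have e4 : 0 <= v * d * (a * b - 1) by rewrite !mulr_ge0.
  have e5 : 0 <= u * b * (c * d - 1) by rewrite !mulr_ge0.
  have e6 : 0 <= v * t * (a * b - 1) by rewrite !mulr_ge0.
  have e7 : 0 <= u * s * (c * d - 1) by rewrite !mulr_ge0.
  have -> : (a * c + a * v + u * c) * (b * d + b * t + s * d) - (a * v * s * d + u * c * b * t) -
    (c + v) * (d + t) - (a + u) * (b + s) + 1 =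
    (a * b - 1) * (c * d - 1) + c * t * (a * b - 1) + a * s * (c * d - 1) + v * d * (a * b - 1)
    + u * b * (c * d - 1) + v * t * (a * b - 1) + u * s * (c * d - 1) by ring.
  lra.
lra.
Qed.




Lemma if_pre A B C D F :
 (forall t k l : R, 0 <= A * t ^+ 2 + B * k ^+ 2 + D * l ^+ 2 - 2 * F * k * l - 2 * t * k) ->
 (forall t k l : R, 0 <= C * t ^+ 2 + B * k ^+ 2 + D * l ^+ 2 - 2 * F * k * l - 2 * t * l) ->
 [/\ 0 < B, 0 < D, 0 < B * D - F ^+ 2, 0 <= A - D / (B * D - F ^+ 2) &
     0 <= C - B / (B * D - F ^+ 2)].
Proof.
move=> Q Q'.
have B0 : 0 <= B by have := Q 0 1 0; lra.
have D0 : 0 <= D by have := Q 0 0 1; lra.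
have Bp : 0 < B.
  have := Q 1 ((A + 1) / 2) 0.
  have -> : A * 1 ^+ 2 + B * ((A + 1) / 2) ^+ 2 + D * 0 ^+ 2 - 2 * F * ((A + 1) / 2) * 0 -
    2 * 1 * ((A + 1) / 2) = B * ((A + 1) / 2) ^+ 2 - 1 by field.
  rewrite lt0r B0 andbT; apply: contraTneq => ->; lra.
have Dp : 0 < D.
  have := Q' 1 0 ((C + 1) / 2).
  have -> : C * 1 ^+ 2 + B * 0 ^+ 2 + D * ((C + 1) / 2) ^+ 2 - 2 * F * 0 * ((C + 1) / 2) -
    2 * 1 * ((C + 1) / 2) = D * ((C + 1) / 2) ^+ 2 - 1 by field.
  rewrite lt0r D0 andbT; apply: contraTneq => ->; lra.
set p := B * D - F ^+ 2.
have p0 : 0 <= p.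
  have := Q 0 F B.
  have -> : A * 0 ^+ 2 + B * F ^+ 2 + D * B ^+ 2 - 2 * F * F * B - 2 * 0 * F = B * p by rewrite /p; ring.
  by rewrite pmulr_rge0.
have pp : 0 < p.
  rewrite lt0r p0 andbT; apply/negP => /eqP pz.
  have := Q' 1 (((C + 1) / (2 * B)) * F) (((C + 1) / (2 * B)) * B).
  have -> : C * 1 ^+ 2 + B * ((C + 1) / (2 * B) * F) ^+ 2 + D * ((C + 1) / (2 * B) * B) ^+ 2 -
     2 * F * ((C + 1) / (2 * B) * F) * ((C + 1) / (2 * B) * B) - 2 * 1 * ((C + 1) / (2 * B) * B)
     = ((C + 1) / (2 * B)) ^+ 2 * B * p - 1.
    by rewrite /p; field; rewrite gt_eqF.
  rewrite pz mulr0 add0r; lra.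
split=> //.
  have := Q 1 (D / p) (F / p).
  have -> : A * 1 ^+ 2 + B * (D / p) ^+ 2 + D * (F / p) ^+ 2 - 2 * F * (D / p) * (F / p) - 2 * 1 * (D / p)
    = A - D / p.
    rewrite /p; field; by rewrite gt_eqF.
  by [].
have := Q' 1 (F / p) (B / p).
have -> : C * 1 ^+ 2 + B * (F / p) ^+ 2 + D * (B / p) ^+ 2 - 2 * F * (F / p) * (B / p) - 2 * 1 * (B / p)
  = C - B / p.
  rewrite /p; field; by rewrite gt_eqF.
by [].
Qed.




Lemma if_constr A B C D E F :
  0 < B -> 0 < D -> 0 < B * D - F ^+ 2 -> 0 <= A - D / (B * D - F ^+ 2) ->
  0 <= C - B / (B * D - F ^+ 2) ->
  0 <= (A * C - E ^+ 2) * (B * D - F ^+ 2) - 2 * `|E * F| - C * D - A * B + 1 ->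
  exists a c : R, [/\ 0 < a, 0 < c, 0 <= A - a, 0 <= C - c & E ^+ 2 <= (A - a) * (C - c)] /\
     [/\ 0 <= B - a^-1, 0 <= D - c^-1 & F ^+ 2 <= (B - a^-1) * (D - c^-1)].
Proof.
set p := B * D - F ^+ 2 => Bp Dp pp.
set y1 := A - D / p; set y2 := C - B / p => y1p y2p H.
have e0 : 0 <= `|E| by rewrite normr_ge0.
have g0 : 0 <= `|F| / p by rewrite divr_ge0 // ?normr_ge0 // ltW.
move: e0 g0 H; rewrite normrM; set e := `|E|; set g := `|F| / p => e0 g0 H.
have Hy : (e + g) ^+ 2 <= y1 * y2.
  rewrite -subr_ge0.
  have -> : y1 * y2 - (e + g) ^+ 2 =
    ((A * C - E ^+ 2) * p - 2 * (e * `|F|) - C * D - A * B + 1) / p.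
    have Ee : E ^+ 2 = e ^+ 2 by rewrite /e real_normK ?num_real.
    have Ff : F ^+ 2 = `|F| ^+ 2 by rewrite real_normK ?num_real.
    rewrite /y1 /y2 /g /p Ee Ff; field; by rewrite -Ff gt_eqF.
  by rewrite divr_ge0 // ltW.
have Ee : E ^+ 2 = e ^+ 2 by rewrite /e real_normK ?num_real.
have Fg : F ^+ 2 = g ^+ 2 * p ^+ 2.
  by rewrite /g expr_div_n real_normK ?num_real // divfK // expf_neq0 // gt_eqF.
have Dp' : 0 < D / p by rewrite divr_gt0.
have Bp' : 0 < B / p by rewrite divr_gt0.
have [d1 [d2 [d10 d1y d20 d2y [dg dE]]]] : exists d1 d2 : R,
   [/\ 0 <= d1, d1 <= y1, 0 <= d2, d2 <= y2 & g ^+ 2 <= d1 * d2 /\ e ^+ 2 <= (y1 - d1) * (y2 - d2)].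
  have [s0|sn0] := eqVneq (e + g) 0.
    have ez : e = 0 by lra.
    have gz : g = 0 by lra.
    exists 0, 0; rewrite ez gz !subr0 expr0n /= mul0r; split=> //; split=> //.
    exact: mulr_ge0.
  have sp : 0 < e + g by rewrite lt0r sn0 /=; lra.
  exists (y1 * (g / (e + g))), (y2 * (g / (e + g))).
  have h1 : g / (e + g) <= 1 by rewrite ler_pdivrMr // mul1r; lra.
  have h2 : 0 <= g / (e + g) by rewrite divr_ge0 // ltW.
  have -> : y1 - y1 * (g / (e + g)) = y1 * (e / (e + g)).
    by field; rewrite gt_eqF.
  have -> : y2 - y2 * (g / (e + g)) = y2 * (e / (e + g)).
    by field; rewrite gt_eqF.
  split.
  - exact: mulr_ge0.
  - by rewrite ler_piMr.
  - exact: mulr_ge0.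
  - by rewrite ler_piMr.
  split.
    have -> : y1 * (g / (e + g)) * (y2 * (g / (e + g))) = (y1 * y2) * (g / (e + g)) ^+ 2 by ring.
    have -> : g ^+ 2 = (e + g) ^+ 2 * (g / (e + g)) ^+ 2 by field; rewrite gt_eqF.
    by rewrite ler_wpM2r // sqr_ge0.
  have -> : y1 * (e / (e + g)) * (y2 * (e / (e + g))) = (y1 * y2) * (e / (e + g)) ^+ 2 by ring.
  have -> : e ^+ 2 = (e + g) ^+ 2 * (e / (e + g)) ^+ 2 by field; rewrite gt_eqF.
  by rewrite ler_wpM2r // sqr_ge0.
exists (D / p + d1), (B / p + d2).
have ap : 0 < D / p + d1 by lra.
have cp : 0 < B / p + d2 by lra.
have a1 : (D / p + d1)^-1 <= B.
  apply: (@le_trans _ _ ((D / p)^-1)).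
    by rewrite lef_pV2 ?posrE //; lra.
  rewrite invf_div ler_pdivrMr // /p; have := sqr_ge0 F; lra.
have c1 : (B / p + d2)^-1 <= D.
  apply: (@le_trans _ _ ((B / p)^-1)).
    by rewrite lef_pV2 ?posrE //; lra.
  rewrite invf_div ler_pdivrMr // /p; have := sqr_ge0 F; lra.
split; split.
- exact: ap.
- exact: cp.
- rewrite /y1 in d1y; lra.
- rewrite /y2 in d2y; lra.
- have -> : A - (D / p + d1) = y1 - d1 by rewrite /y1; ring.
  have -> : C - (B / p + d2) = y2 - d2 by rewrite /y2; ring.
  by rewrite Ee.
- by rewrite subr_ge0.
- by rewrite subr_ge0.
have hBD : B = (p + g ^+ 2 * p ^+ 2) / D.
  by rewrite -Fg /p; field; rewrite gt_eqF.
rewrite -subr_ge0.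
have -> : (B - (D / p + d1)^-1) * (D - (B / p + d2)^-1) - F ^+ 2 =
   p / ((D / p + d1) * (B / p + d2)) * (d1 * d2 - g ^+ 2).
  move: ap cp; rewrite Fg hBD => ap cp.
  field.
  have h1 : 0 <= (g * p) ^+ 2 by rewrite sqr_ge0.
  have h2 : 0 <= d2 * (D * p) by rewrite mulr_ge0 // mulr_ge0 // ltW.
  have h3 : 0 <= d1 * p by rewrite mulr_ge0 // ltW.
  rewrite !gt_eqF //; lra.
have : 0 <= p / ((D / p + d1) * (B / p + d2)) * (d1 * d2 - g ^+ 2).
  by rewrite mulr_ge0 // ?subr_ge0 // divr_ge0 ?ltW // mulr_gt0.
done.
Qed.
End Alg.
Lemma onlyif_real (R : realType) (g0 g1 g2 g3 h0 h1 h2 h3 A B C D E F : R) :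
  (forall t u : R, 0 <= t * t * g0 + u * u * g1 - 2 * t * u) ->
  (forall t u : R, 0 <= t * t * g2 + u * u * g3 - 2 * t * u) ->
  (forall t u : R, 0 <= t * t * h0 + u * u * h1 - 2 * t * u) ->
  (forall t u : R, 0 <= t * t * h2 + u * u * h3 - 2 * t * u) ->
  (forall x y : R, 0 <= x * x * (A - g0) + 2 * E * x * y + y * y * (C - h0)) ->
  (forall x y : R, 0 <= x * x * (A - g2) - 2 * E * x * y + y * y * (C - h2)) ->
  (forall x y : R, 0 <= x * x * (B - g1) - 2 * F * x * y + y * y * (D - h3)) ->
  (forall x y : R, 0 <= x * x * (B - g3) - 2 * F * x * y + y * y * (D - h1)) ->
  0 <= (A * C - E ^+ 2) * (B * D - F ^+ 2) - 2 * `|E * F| - C * D - A * B + 1.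
Proof.
move=> G1 G2 H1 H2 X1 X2 P1 P2.
have [a0 b0 ab] : [/\ 0 <= (g0 + g2) / 2, 0 <= (g1 + g3) / 2 & (-1) ^+ 2 <= (g0 + g2) / 2 * ((g1 + g3) / 2)].
  apply: quad_psd => x y; have := G1 x y; have := G2 x y; lra.
have [c0 d0 cd] : [/\ 0 <= (h0 + h2) / 2, 0 <= (h1 + h3) / 2 & (-1) ^+ 2 <= (h0 + h2) / 2 * ((h1 + h3) / 2)].
  apply: quad_psd => x y; have := H1 x y; have := H2 x y; lra.
have [u0 v0 uv] : [/\ 0 <= A - (g0 + g2) / 2, 0 <= C - (h0 + h2) / 2 & E ^+ 2 <= (A - (g0 + g2) / 2) * (C - (h0 + h2) / 2)].
  apply: quad_psd => x y; have := X1 x y; have := X2 x (- y); lra.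
have [s0 t0 st] : [/\ 0 <= B - (g1 + g3) / 2, 0 <= D - (h1 + h3) / 2 & (- F) ^+ 2 <= (B - (g1 + g3) / 2) * (D - (h1 + h3) / 2)].
  apply: quad_psd => x y; have := P1 x y; have := P2 x y; lra.
rewrite sqrrN expr1n in ab cd; rewrite sqrrN in st.
exact: (@only_if_alg R A B C D E F _ _ _ _ a0 b0 c0 d0 ab cd u0 v0 uv s0 t0 st).
Qed.


Section Cplx.
Variable R : rcfType.
Local Open Scope complex_scope.
Lemma ReD (x y : R[i]) : complex.Re (x + y) = complex.Re x + complex.Re y. Proof. by case: x => a b; case: y => c d. Qed.
Lemma ImD (x y : R[i]) : complex.Im (x + y) = complex.Im x + complex.Im y. Proof. by case: x => a b; case: y => c d. Qed.
Lemma ReM (x y : R[i]) : complex.Re (x * y) = complex.Re x * complex.Re y - complex.Im x * complex.Im y. Proof. by case: x => a b; case: y => c d. Qed.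
Lemma ImM (x y : R[i]) : complex.Im (x * y) = complex.Re x * complex.Im y + complex.Im x * complex.Re y.
Proof. by case: x => a b; case: y => c d /=; rewrite addrC. Qed.
Lemma Reconj (x : R[i]) : complex.Re (x^*) = complex.Re x. Proof. by case: x. Qed.
Lemma Imconj (x : R[i]) : complex.Im (x^*) = - complex.Im x. Proof. by case: x. Qed.
Lemma Rereal (r : R) : complex.Re (r%:C) = r. Proof. by []. Qed.
Lemma Imreal (r : R) : complex.Im (r%:C) = 0. Proof. by []. Qed.
End Cplx.

Lemma bilin (R : comPzRingType) n (M : 'M[R]_n) (u w : 'cV[R]_n) :
  (u^T *m M *m w) 0 0 = \sum_i \sum_j u i 0 * M i j * w j 0.
Proof.
rewrite mxE exchange_big /=; apply: eq_bigr => i _.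
rewrite mxE big_distrl /=; apply: eq_bigr => j _.
by rewrite !mxE.
Qed.

Lemma dMd (R : comPzRingType) n (M : 'M[R]_n) (i j : 'I_n) :
  ((delta_mx i (0 : 'I_1))^T *m M *m (delta_mx j (0 : 'I_1) : 'cV_n)) 0 0 = M i j.
Proof. by rewrite trmx_delta -rowE -colE !mxE. Qed.

Lemma mxaddE (R : nmodType) m n (A B : 'M[R]_(m, n)) i j : (A + B) i j = A i j + B i j.
Proof. by rewrite mxE. Qed.
Lemma mxscaleE (R : pzRingType) m n a (A : 'M[R]_(m, n)) i j : (a *: A) i j = a * A i j.
Proof. by rewrite mxE. Qed.

Lemma quad3 (R : comPzRingType) n (M : 'M[R]_n) (u w : 'cV[R]_n) i j k (a b c a' b' c' : R) :
  u = a *: delta_mx i 0 + b *: delta_mx j 0 + c *: delta_mx k 0 ->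
  w = a' *: delta_mx i 0 + b' *: delta_mx j 0 + c' *: delta_mx k 0 ->
  (u^T *m M *m w) 0 0 =
    a * a' * M i i + a * b' * M i j + a * c' * M i k +
    b * a' * M j i + b * b' * M j j + b * c' * M j k +
    c * a' * M k i + c * b' * M k j + c * c' * M k k.
Proof.
move=> -> ->.
rewrite !linearD /= !linearZ /= !(mulmxDl, mulmxDr, scalemxAl, scalemxAr).
rewrite !(mulmxDl, mulmxDr, =^~ scalemxAl, =^~ scalemxAr).
rewrite !mxaddE !mxscaleE !mxaddE !mxscaleE !dMd.
ring.
Qed.

Lemma rpsd_test2 (R : realType) n (M : 'M[R]_n) i j (x y : R) :
  rpsd M -> 0 <= x * x * M i i + x * y * M i j + y * x * M j i + y * y * M j j.
Proof.
move=> [_ H].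
have := H (x *: delta_mx i 0 + y *: delta_mx j 0 + 0 *: delta_mx i 0).
rewrite (@quad3 _ _ M _ _ i j i x y 0 x y 0 erefl erefl).
by rewrite !(mul0r, mulr0, add0r, addr0).
Qed.

Lemma cov_test3 (R : rcfType) n (g s : 'M[R]_n) i j k (t u w : R) :
  cpsd (map_mx (real_complex R) g + (Complex 0 1) *: map_mx (real_complex R) s) ->
  0 <= t * t * g i i + u * u * g j j + w * w * g k k + u * w * (g j k + g k j)
       - t * u * (s i j - s j i) - t * w * (s i k - s k i).
Proof.
move=> [_ H].
set v : 'cV[R[i]]_n := (real_complex R t) *: delta_mx i 0 + (Complex 0 u) *: delta_mx j 0 + (Complex 0 w) *: delta_mx k 0.
have := H v.
rewrite (@quad3 _ _ _ _ _ i j k (conjc (real_complex R t)) (conjc (Complex 0 u)) (conjc (Complex 0 w))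
   (real_complex R t) (Complex 0 u) (Complex 0 w)); last by []; last first.
  by rewrite /v !map_mxD !map_mxZ !map_delta_mx.
  rewrite lecE => /andP [_].
  rewrite !mxaddE !mxscaleE !mxE.
  rewrite !(ReD, ReM, Reconj, ImD, ImM, Imconj) /=.
  move=> h; apply: (le_trans h); rewrite le_eqVlt; apply/orP; left; apply/eqP; ring.
Qed.

Lemma mxoppE (R : zmodType) m n (A : 'M[R]_(m, n)) i j : (- A) i j = - A i j.
Proof. by rewrite mxE. Qed.
Lemma mx0E (R : zmodType) m n i j : (0 : 'M[R]_(m, n)) i j = 0.
Proof. by rewrite mxE. Qed.

Definition o0 : 'I_(2.*2) := @Ordinal (2.*2) 0 isT.
Definition o1 : 'I_(2.*2) := @Ordinal (2.*2) 1 isT.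
Definition o2 : 'I_(2.*2) := @Ordinal (2.*2) 2 isT.
Definition o3 : 'I_(2.*2) := @Ordinal (2.*2) 3 isT.


Lemma sympT2 (R : pzRingType) : (symp_form R 2)^T = - symp_form R 2.
Proof.
apply/matrixP => i j; rewrite !mxE.
case: i => [[|[|[|[|i]]]] Hi] //; case: j => [[|[|[|[|j]]]] Hj] //=; by rewrite ?oppr0 ?opprK.
Qed.

Lemma wwCT (R : pzRingType) (E F : R) : (wwC E F)^T = wwC E F.
Proof.
apply/matrixP => i j; rewrite !mxE.
by case: i => [[|[|[|[|i]]]] Hi] //; case: j => [[|[|[|[|j]]]] Hj].
Qed.

Lemma diag4T (R : pzRingType) (a b : R) : (diag4 a b)^T = diag4 a b.
Proof. by rewrite /diag4 tr_diag_mx. Qed.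


Lemma herm_real (R : rcfType) n (g s : 'M[R]_n) : g^T = g -> s^T = - s ->
  (map_mx (@conjc R) (map_mx (real_complex R) g + (Complex 0 1) *: map_mx (real_complex R) s))^T =
   map_mx (real_complex R) g + (Complex 0 1) *: map_mx (real_complex R) s.
Proof.
move=> hg hs; apply/matrixP => i j; rewrite !mxE.
have -> : g j i = g i j by have := congr1 (fun M : 'M_n => M i j) hg; rewrite !mxE.
have -> : s j i = - s i j by have := congr1 (fun M : 'M_n => M i j) hs; rewrite !mxE.
by apply/eqP; rewrite eq_complex /=; apply/andP; split; apply/eqP; ring.
Qed.


Lemma diag_cov (R : realType) (a : R) : 0 < a -> is_cov (n := 2) (diag4 a a^-1).
Proof.
move=> ap; split.
  by apply: herm_real; rewrite ?diag4T ?sympT2.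
move=> v; rewrite bilin.
rewrite !big_ord_recl; do ?rewrite big_ord0.
rewrite !mxE /=.
rewrite !(mulr0n, mulr1n, rmorph0, rmorph1, rmorphN1, mulr0, mul0r, addr0, add0r, mulr1).
move: (v ord0 0) (v (lift ord0 ord0) 0) (v (lift ord0 (lift ord0 ord0)) 0)
  (v (lift ord0 (lift ord0 (lift ord0 ord0))) 0) => z0 z1 z2 z3.
case: z0 => p0 q0; case: z1 => p1 q1; case: z2 => p2 q2; case: z3 => p3 q3.
rewrite lecE; apply/andP; split;
  rewrite !(ReD, ReM, ImD, ImM, Reconj, Imconj) /=.
  by apply/eqP; ring.
set X := (X in _ <= X).
have -> : X = ((a * p0 - q1) ^+ 2 + (a * q0 + p1) ^+ 2 + (a * p2 - q3) ^+ 2 + (a * q2 + p3) ^+ 2) / a.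
  by rewrite /X; field; rewrite gt_eqF.
apply: divr_ge0; last exact: ltW.
by rewrite !addr_ge0 // sqr_ge0.
Qed.

Lemma psd2 (R : realType) (p q r x y : R) :
  0 <= p -> 0 <= r -> q ^+ 2 <= p * r -> 0 <= p * x ^+ 2 + 2 * q * x * y + r * y ^+ 2.
Proof.
move=> hp hr hq.
have [p0|pn0] := eqVneq p 0.
  have q0 : q = 0.
    by apply/eqP; rewrite -sqrf_eq0 eq_le sqr_ge0 andbT; move: hq; rewrite p0 mul0r.
  rewrite p0 q0 !mul0r mulr0 !mul0r !add0r; by apply: mulr_ge0; rewrite ?sqr_ge0.
have pp : 0 < p by rewrite lt0r pn0.
have h : p * (p * x ^+ 2 + 2 * q * x * y + r * y ^+ 2) = (p * x + q * y) ^+ 2 + (p * r - q ^+ 2) * y ^+ 2 by ring.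
have : 0 <= p * (p * x ^+ 2 + 2 * q * x * y + r * y ^+ 2).
  by rewrite h addr_ge0 ?sqr_ge0 // mulr_ge0 ?sqr_ge0 // subr_ge0.
by rewrite pmulr_rge0.
Qed.

Lemma sep_psd (R : realType) (A B C D E F a c : R) :
  0 <= A - a -> 0 <= C - c -> E ^+ 2 <= (A - a) * (C - c) ->
  0 <= B - a^-1 -> 0 <= D - c^-1 -> F ^+ 2 <= (B - a^-1) * (D - c^-1) ->
  rpsd (ww_gamma A B C D E F - block_mx (diag4 a a^-1) 0 0 (diag4 c c^-1)).
Proof.
move=> h1 h2 h3 h4 h5 h6; split.
  by rewrite linearB /= /ww_gamma !tr_block_mx !wwCT !diag4T trmx0.
move=> v; rewrite -(vsubmxK v) /ww_gamma opp_block_mx add_block_mx tr_col_mx mul_row_block mul_row_col.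
rewrite !oppr0 !addr0 !mxaddE !mulmxDl ?mxaddE ?mxaddE !bilin.
rewrite !big_ord_recl; do ?rewrite big_ord0.
rewrite !mxE /=.
rewrite !(mulr0n, mulr1n, subrr, mulr0, mul0r, add0r, addr0).
set u0 := v (lshift _ ord0) 0.
set u1 := v (lshift _ (lift ord0 ord0)) 0.
set u2 := v (lshift _ (lift ord0 (lift ord0 ord0))) 0.
set u3 := v (lshift _ (lift ord0 (lift ord0 (lift ord0 ord0)))) 0.
set w0 := v (rshift _ ord0) 0.
set w1 := v (rshift _ (lift ord0 ord0)) 0.
set w2 := v (rshift _ (lift ord0 (lift ord0 ord0))) 0.
set w3 := v (rshift _ (lift ord0 (lift ord0 (lift ord0 ord0)))) 0.
have h3' : (- E) ^+ 2 <= (A - a) * (C - c) by rewrite sqrrN.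
have h6' : (- F) ^+ 2 <= (B - a^-1) * (D - c^-1) by rewrite sqrrN.
have := @psd2 R _ _ _ u0 w0 h1 h2 h3.
have := @psd2 R _ _ _ u2 w2 h1 h2 h3'.
have := @psd2 R _ _ _ u1 w3 h4 h5 h6'.
have := @psd2 R _ _ _ u3 w1 h4 h5 h6'.
clearbody u0 u1 u2 u3 w0 w1 w2 w3.
lra.
Qed.


Theorem mainTheorem4 (R : realType) (A B C D E F : R) :
  is_cov (n := 4) (ww_gamma A B C D E F) ->
  (gaussian_separable (m := 2) (n := 2) (ww_gamma A B C D E F) <->
   0 <= (A * C - E ^+ 2) * (B * D - F ^+ 2) - 2 * `|E * F| - C * D - A * B + 1).
Proof.
move=> Hc; split.
- case=> gA [gB [HA [HB HM]]].
  apply: (@onlyif_real R (gA o0 o0) (gA o1 o1) (gA o2 o2) (gA o3 o3)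
                         (gB o0 o0) (gB o1 o1) (gB o2 o2) (gB o3 o3)).
  + move=> t u; have := @cov_test3 R _ gA (symp_form R 2) o0 o1 o1 t u 0 HA.
    rewrite /symp_form !mxE /=; lra.
  + move=> t u; have := @cov_test3 R _ gA (symp_form R 2) o2 o3 o3 t u 0 HA.
    rewrite /symp_form !mxE /=; lra.
  + move=> t u; have := @cov_test3 R _ gB (symp_form R 2) o0 o1 o1 t u 0 HB.
    rewrite /symp_form !mxE /=; lra.
  + move=> t u; have := @cov_test3 R _ gB (symp_form R 2) o2 o3 o3 t u 0 HB.
    rewrite /symp_form !mxE /=; lra.
  + move=> x y; have := @rpsd_test2 R _ _ (lshift (2.*2) o0) (rshift (2.*2) o0) x y HM.
    rewrite !mxaddE !mxoppE /ww_gamma !(block_mxEul, block_mxEur, block_mxEdl, block_mxEdr) !mx0E.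
    rewrite /diag4 /wwC !mxE /=; lra.
  + move=> x y; have := @rpsd_test2 R _ _ (lshift (2.*2) o2) (rshift (2.*2) o2) x y HM.
    rewrite !mxaddE !mxoppE /ww_gamma !(block_mxEul, block_mxEur, block_mxEdl, block_mxEdr) !mx0E.
    rewrite /diag4 /wwC !mxE /=; lra.
  + move=> x y; have := @rpsd_test2 R _ _ (lshift (2.*2) o1) (rshift (2.*2) o3) x y HM.
    rewrite !mxaddE !mxoppE /ww_gamma !(block_mxEul, block_mxEur, block_mxEdl, block_mxEdr) !mx0E.
    rewrite /diag4 /wwC !mxE /=; lra.
  + move=> x y; have := @rpsd_test2 R _ _ (lshift (2.*2) o3) (rshift (2.*2) o1) x y HM.
    rewrite !mxaddE !mxoppE /ww_gamma !(block_mxEul, block_mxEur, block_mxEdl, block_mxEdr) !mx0E.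
    rewrite /diag4 /wwC !mxE /=; lra.
- move=> Hineq.
  have Q : forall t k l : R, 0 <= A * t ^+ 2 + B * k ^+ 2 + D * l ^+ 2 - 2 * F * k * l - 2 * t * k.
    move=> t k l.
    have := @cov_test3 R _ (ww_gamma A B C D E F) (symp_form R 4)
      (lshift (2.*2) o0) (lshift (2.*2) o1) (rshift (2.*2) o3) t k l Hc.
    rewrite /ww_gamma !(block_mxEul, block_mxEur, block_mxEdl, block_mxEdr).
    rewrite /symp_form /diag4 /wwC !mxE /=; lra.
  have Q' : forall t k l : R, 0 <= C * t ^+ 2 + B * k ^+ 2 + D * l ^+ 2 - 2 * F * k * l - 2 * t * l.
    move=> t k l.
    have := @cov_test3 R _ (ww_gamma A B C D E F) (symp_form R 4)
      (rshift (2.*2) o2) (lshift (2.*2) o1) (rshift (2.*2) o3) t k l Hc.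
    rewrite /ww_gamma !(block_mxEul, block_mxEur, block_mxEdl, block_mxEdr).
    rewrite /symp_form /diag4 /wwC !mxE /=; lra.
  have [Bp Dp pp y1 y2] := @if_pre R A B C D F Q Q'.
  have [a [c [[ap cp hA hC hE] [hB hD hF]]]] := @if_constr R A B C D E F Bp Dp pp y1 y2 Hineq.
  exists (diag4 a a^-1), (diag4 c c^-1).
  split; first exact: diag_cov.
  split; first exact: diag_cov.
  exact: sep_psd.
Qed.
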